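(* Consider the discrete first-price auction in the model without ties, with values drawn i.i.d. from a distribution with full support on $X$. If $\beta$ and $\beta'$ are both symmetric equilibrium bidding functions with $\beta(1)=\beta'(1)$, then $\beta=\beta'$. That is, the SE (if it exists) is unique up to the choice of $\beta(1)\in\{0,1\}$.
   Context: Model. There are $n\ge 2$ risk-neutral bidders competing for one indivisible object. Normalise the grid so that values and bids lie in $X=\{0,1,2,\dots,x\}$ for some $x\in\mathbb N$. Each bidder $i$ privately learns a value $v_i\in X$; values are drawn independently from a common distribution in which every element of $X$ has strictly positive probability. Each bidder submits a bid $b_i\in X$. A (pure) strategy is a bidding function $\beta:X\to X$. In the model without ties, bidder $i$ wins iff $b_i>b_j$ for all $j\neq i$ (if the highest bid is tied, nobody wins). In the first-price auction, a bidder with value $v_i$ bidding $b_i$ gets expected payoff $(v_i-b_i)\Pr(i\text{ wins})$. An equilibrium is a profile of bidding functions such that each bidder's bidding function maximises their expected payoff given the others' bidding functions (a pure-strategy Bayes–Nash equilibrium) and such that no bidder uses a weakly dominated bidding function (a bidding function is weakly dominated if some other bidding function yields at least as high expected payoff against every profile of opponents' bidding functions, and strictly higher against some). A symmetric equilibrium (SE) is an equilibrium in which all bidders use the same bidding function $\beta$. *)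

(* Defs.v *)
From mathcomp Require Import all_boot all_order all_algebra.
Set Implicit Arguments. Unset Strict Implicit. Unset Printing Implicit Defensive.
Import Order.TTheory GRing.Theory Num.Theory.
Local Open Scope ring_scope.

(* Grid X = {0,...,x} is 'I_x.+1; a value/bid v : 'I_x.+1 stands for the
   natural number (val v). A pure strategy is a bidding function X -> X. *)
Definition strat (x : nat) := 'I_x.+1 -> 'I_x.+1.

Definition profile (n x : nat) := 'I_n -> strat x.

Section Auction.
Variables (R : realFieldType) (n x : nat) (p : 'I_x.+1 -> R).

Definition full_support_dist := (forall v, 0 < p v) /\ \sum_(v < x.+1) p v = 1.

(* Probability that bidder i, bidding b, wins (model without ties: every
   opponent's bid must be strictly lower), when the opponents j != i use the
   bidding functions prof j and values are drawn i.i.d. from p. *)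
Definition win_prob (prof : profile n x) (i : 'I_n) (b : 'I_x.+1) : R :=
  \prod_(j < n | j != i) \sum_(w < x.+1 | (val (prof j w) < val b)%N) p w.

(* Expected payoff of bidder i using bidding function beta in the first-price
   auction, against the opponents' bidding functions in prof (entry i of prof
   is ignored). *)
Definition payoff (prof : profile n x) (i : 'I_n) (beta : strat x) : R :=
  \sum_(v < x.+1) p v * (((val v)%:R - (val (beta v))%:R) * win_prob prof i (beta v)).

Definition weakly_dominated (i : 'I_n) (beta : strat x) : Prop :=
  exists beta' : strat x,
    (forall prof : profile n x, payoff prof i beta <= payoff prof i beta') /\
    (exists prof : profile n x, payoff prof i beta < payoff prof i beta').

Definition equilibrium (prof : profile n x) : Prop :=
  (forall (i : 'I_n) (beta' : strat x), payoff prof i beta' <= payoff prof i (prof i)) /\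
  (forall i : 'I_n, ~ weakly_dominated i (prof i)).

Definition symmetric_equilibrium (beta : strat x) : Prop :=
  equilibrium (fun _ => beta).

End Auction.

(* Main.v *)
Require Import Defs.
From mathcomp Require Import all_boot all_order all_algebra ring zify.
Set Implicit Arguments. Unset Strict Implicit. Unset Printing Implicit Defensive.
Import Order.TTheory GRing.Theory Num.Theory.
Local Open Scope ring_scope.

Section Aux.
Variables (R : realFieldType) (n x : nat) (p : 'I_x.+1 -> R).
Hypothesis hp : full_support_dist p.

Definition T (prof : profile n x) (i : 'I_n) (v b : 'I_x.+1) : R :=
  ((val v)%:R - (val b)%:R) * win_prob p prof i b.

Lemma p_gt0 v : 0 < p v. Proof. by case: hp. Qed.
Lemma p_ge0 v : 0 <= p v. Proof. exact: ltW (p_gt0 v). Qed.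

Lemma payoff_split prof i (beta : strat x) v0 :
  payoff p prof i beta = p v0 * T prof i v0 (beta v0)
     + \sum_(v < x.+1 | v != v0) p v * T prof i v (beta v).
Proof. by rewrite /payoff (bigD1 v0). Qed.

Definition upd (beta : strat x) v0 b : strat x :=
  fun w => if w == v0 then b else beta w.

Lemma payoff_upd prof i beta v0 b :
  payoff p prof i (upd beta v0 b) = payoff p prof i beta
     + p v0 * (T prof i v0 b - T prof i v0 (beta v0)).
Proof.
rewrite !(payoff_split _ _ _ v0) /upd eqxx.
rewrite (eq_bigr (fun v => p v * T prof i v (beta v))); last first.
  by move=> v /negbTE ->.
ring.
Qed.

Lemma wp_ge0 (prof : profile n x) (i : 'I_n) b : 0 <= win_prob p prof i b.
Proof. apply: prodr_ge0 => j _; apply: sumr_ge0 => w _; exact: p_ge0. Qed.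

Definition zprof : profile n x := fun _ _ => ord0.

Lemma wp_zero i (b : 'I_x.+1) : (0 < val b)%N -> win_prob p zprof i b = 1.
Proof.
move=> hb; rewrite /win_prob; apply: big1 => j _.
rewrite (eq_bigl xpredT); first by case: hp.
by move=> w /=; rewrite hb.
Qed.

Lemma not_dom_dev i beta v0 b :
  ~ weakly_dominated p i beta ->
  (forall prof, T prof i v0 (beta v0) <= T prof i v0 b) ->
  (exists prof, T prof i v0 (beta v0) < T prof i v0 b) -> False.
Proof.
move=> nd hle [prof hlt]; apply: nd; exists (upd beta v0 b); split.
- move=> pr; rewrite payoff_upd lerDl; apply: mulr_ge0; first exact: p_ge0.
  by rewrite subr_ge0.
- exists prof; rewrite payoff_upd ltrDl; apply: mulr_gt0; first exact: p_gt0.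
  by rewrite subr_gt0.
Qed.

Lemma br_dev prof i v0 b :
  (forall beta', payoff p prof i beta' <= payoff p prof i (prof i)) ->
  T prof i v0 b <= T prof i v0 (prof i v0).
Proof.
move=> h; have := h (upd (prof i) v0 b); rewrite payoff_upd gerDl.
by rewrite pmulr_rle0 ?subr_le0 // p_gt0.
Qed.

Variable i0 : 'I_n.
Hypothesis hm : (0 < #|predC1 i0|)%N.

Definition S (beta : strat x) (c : 'I_x.+1) : R :=
  \sum_(w < x.+1 | (val (beta w) < val c)%N) p w.

Lemma S_ge0 beta c : 0 <= S beta c.
Proof. apply: sumr_ge0 => w _; exact: p_ge0. Qed.

Lemma wp_sym beta c : win_prob p (fun _ => beta) i0 c = S beta c ^+ #|predC1 i0|.
Proof. by rewrite /win_prob -prodr_const. Qed.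

Lemma pow_lt (a b : R) : 0 <= a -> a < b -> a ^+ #|predC1 i0| < b ^+ #|predC1 i0|.
Proof. by move=> ha hab; rewrite ltrXn2r // -lt0n. Qed.

Lemma pow_le (a b : R) : 0 <= a -> a <= b -> a ^+ #|predC1 i0| <= b ^+ #|predC1 i0|.
Proof.
move=> ha; rewrite le_eqVlt => /orP [/eqP -> //| hab].
exact: ltW (pow_lt ha hab).
Qed.

Lemma S_mono beta (c c' : 'I_x.+1) : (val c <= val c')%N -> S beta c <= S beta c'.
Proof.
move=> hc; rewrite /S !(big_mkcond (fun w => (val (beta w) < val _)%N)) /=.
apply: ler_sum => w _.
case: ifP => h1; case: ifP => h2 //; last exact: p_ge0.
by move: h2; rewrite (leq_trans h1 hc).
Qed.

Variable beta : strat x.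
Hypothesis hse : symmetric_equilibrium n p beta.

Let W c := win_prob p (fun _ : 'I_n => beta) i0 c.

Lemma BR v c : T (fun _ => beta) i0 v c <= T (fun _ => beta) i0 v (beta v).
Proof. by apply: br_dev; case: hse => h _; exact: h. Qed.

Lemma ND : ~ weakly_dominated p i0 beta.
Proof. by case: hse => _ h; exact: h. Qed.

Lemma B0 v : (val (beta v) <= val v)%N.
Proof.
rewrite leqNgt; apply/negP => hlt.
apply: (@not_dom_dev i0 beta v v ND).
- move=> prof; rewrite /T subrr mul0r; apply: mulr_le0_ge0; last exact: wp_ge0.
  by rewrite subr_le0 ler_nat ltnW.
- exists zprof; rewrite /T subrr mul0r wp_zero; last exact: leq_ltn_trans hlt.
  by rewrite mulr1 subr_lt0 ltr_nat.
Qed.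

Lemma B2 v : (2 <= val v)%N -> (val (beta v) < val v)%N.
Proof.
move=> h2; rewrite ltn_neqAle B0 andbT; apply/negP => /eqP heq.
have hvx : ((val v).-1 < x.+1)%N by apply: leq_ltn_trans (ltn_ord v); exact: leq_pred.
pose b := Ordinal hvx.
apply: (@not_dom_dev i0 beta v b ND).
- move=> prof; rewrite /T heq subrr mul0r; apply: mulr_ge0; last exact: wp_ge0.
  by rewrite subr_ge0 ler_nat leq_pred.
- exists zprof; rewrite /T heq subrr mul0r wp_zero; last by have h2' : (1 < nat_of_ord v)%N := h2; rewrite /=; lia.
  have h2' : (1 < nat_of_ord v)%N := h2. by rewrite mulr1 subr_gt0 ltr_nat /=; lia.
Qed.

Lemma Spos c : (0 < val c)%N -> 0 < S beta c.
Proof.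
move=> hc; rewrite /S (bigD1 ord0) /=; last first.
  by have := B0 ord0; rewrite leqn0 => /eqP ->.
apply: (lt_le_trans (p_gt0 ord0)); rewrite lerDl; apply: sumr_ge0 => w _.
exact: p_ge0.
Qed.

Lemma Mono v v' : (val v <= val v')%N -> (val (beta v) <= val (beta v'))%N.
Proof.
move=> hvv; rewrite leqNgt; apply/negP => hb.
have hvv' : (val v < val v')%N.
  rewrite ltn_neqAle hvv andbT; apply/negP => /eqP/val_inj heq.
  by move: hb; rewrite heq ltnn.
have h1 := BR v (beta v'); have h2 := BR v' (beta v).
move: h1 h2; rewrite /T -/(W _) -/(W _) -/(W _) -/(W _).
have hA : W (beta v') <= W (beta v).
  by rewrite /W !wp_sym; apply: pow_le; [exact: S_ge0| apply: S_mono; exact: ltnW].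
have hB : 0 < W (beta v).
  rewrite /W wp_sym exprn_gt0 // Spos //; exact: leq_ltn_trans hb.
set A := W (beta v') in hA *; set B := W (beta v) in hA hB *.
set a := (val v)%:R; set a' := (val v')%:R; set b := (val (beta v))%:R; set b' := (val (beta v'))%:R.
have ha : a < a' by rewrite ltr_nat.
have hbb : b' < b by rewrite ltr_nat.
move=> h1 h2.
have h3 : (a' - a) * (B - A) <= 0.
  have -> : (a' - a) * (B - A) = ((a - b') * A - (a - b) * B) + ((a' - b) * B - (a' - b') * A) by ring.
  by rewrite -(addr0 0); apply: lerD; rewrite subr_le0.
rewrite pmulr_rle0 ?subr_gt0 // subr_le0 in h3.
have hAB : A = B by apply/eqP; rewrite eq_le hA h3.
rewrite hAB ler_pM2r // in h1.
by move: h1; rewrite lerD2l lerN2 leNgt hbb.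
Qed.

End Aux.


Section Step.
Variables (R : realFieldType) (n x : nat) (p : 'I_x.+1 -> R).
Hypothesis hp : full_support_dist p.
Variable i0 : 'I_n.
Hypothesis hm : (0 < #|predC1 i0|)%N.
Variables beta1 beta2 : strat x.
Hypothesis hse1 : symmetric_equilibrium n p beta1.
Hypothesis hse2 : symmetric_equilibrium n p beta2.

Lemma step v : (2 <= val v)%N -> (forall w : 'I_x.+1, (val w < val v)%N -> beta1 w = beta2 w) ->
  (val (beta1 v) < val (beta2 v))%N -> False.
Proof.
move=> h2 hagree hlt.
set b1 := beta1 v; set b2 := beta2 v.
have C1 : S p beta1 b1 = S p beta2 b1.
  apply: eq_bigl => w /=.
  case: (ltnP (val w) (val v)) => hw; first by rewrite hagree.
  have m1 := Mono hp hm hse1 hw; have m2 := Mono hp hm hse2 hw.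
  rewrite leqNgt in m1; rewrite (negbTE m1); apply/esym/negbTE.
  by rewrite -leqNgt; apply: leq_trans m2; exact: ltnW.
have C2 : p v + S p beta2 b2 <= S p beta1 b2.
  rewrite /S !(big_mkcond (fun w => (val (_ w) < val b2)%N)) /=.
  rewrite [X in _ <= X](bigD1 v) //= [X in _ + X <= _](bigD1 v) //= ltnn hlt add0r.
  rewrite lerD2l; apply: ler_sum => w hwv.
  case: (ltnP (val w) (val v)) => hw; first by rewrite hagree.
  have m2 := Mono hp hm hse2 hw; rewrite ltnNge m2 /=.
  by case: ifP => _ //; exact: p_ge0.
have C2' : S p beta2 b2 < S p beta1 b2.
  by apply: lt_le_trans C2; rewrite ltrDr p_gt0.
have hW : win_prob p (fun _ => beta2) i0 b2 < win_prob p (fun _ => beta1) i0 b2.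
  by rewrite !wp_sym; apply: pow_lt => //; exact: S_ge0.
have hWe : win_prob p (fun _ => beta1) i0 b1 = win_prob p (fun _ => beta2) i0 b1.
  by rewrite !wp_sym C1.
have h1 := BR hp i0 hse1 v b2. have hb2v := B2 hp hm hse2 h2.
have h2b := BR hp i0 hse2 v b1.
rewrite /T -/b1 -/b2 in h1 h2b; rewrite hWe in h1.
have hpos : 0 < (val v)%:R - (val b2)%:R :> R.
  by rewrite subr_gt0 ltr_nat.
have hX := hW; rewrite -(ltr_pM2l hpos) in hX.
have := lt_le_trans hX (le_trans h1 h2b).
by rewrite ltxx.
Qed.

End Step.

Theorem lemma5 (R : realFieldType) (n x : nat) (p : 'I_x.+1 -> R)
  (beta beta' : strat x) :
  (2 <= n)%N ->
  full_support_dist p ->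
  symmetric_equilibrium n p beta ->
  symmetric_equilibrium n p beta' ->
  (forall v : 'I_x.+1, val v = 1%N -> beta v = beta' v) ->
  beta =1 beta'.
Proof.
move=> hn hp hse hse' h1.
have hn0 : (0 < n)%N by exact: leq_trans hn.
pose i0 := Ordinal hn0.
have hm : (0 < #|predC1 i0|)%N by rewrite cardC1 card_ord; lia.
suff H : forall k (v : 'I_x.+1), (val v < k)%N -> beta v = beta' v.
  by move=> v; apply: (H (val v).+1).
elim=> [//|k IH] v hv.
rewrite ltnS leq_eqVlt in hv; case/orP: hv => [/eqP hk|]; last exact: IH.
have hag : forall w : 'I_x.+1, (val w < val v)%N -> beta w = beta' w.
  by move=> w; rewrite hk; exact: IH.
case: k hk IH hag => [|[|k]] hk IH hag.
- apply: val_inj; have := B0 hp i0 hse v; have := B0 hp i0 hse' v.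
  by rewrite hk !leqn0 => /eqP -> /eqP ->.
- exact: h1.
- have h2 : (2 <= val v)%N by rewrite hk.
  case: (ltngtP (val (beta v)) (val (beta' v))) => hc.
  + by case: (step hp hm hse hse' h2 hag hc).
  + have hag' : forall w : 'I_x.+1, (val w < val v)%N -> beta' w = beta w.
      by move=> w hw; rewrite hag.
    by case: (step hp hm hse' hse h2 hag' hc).
  + exact: val_inj.
Qed.
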